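(* Every exceptional domestic duality of a building $\mathsf{A}_n(2)$ (the projective space $\mathsf{PG}(n,2)$, $n\geq 2$) is strongly exceptional domestic.
   Context: Types of $\mathsf{PG}(n,2)$ are $1,\ldots,n$ (type $i$: $(i-1)$-dimensional subspaces), $S=\{1,\ldots,n\}$. A duality is an automorphism with type map $i\mapsto n+1-i$; composing with opposition $i\mapsto n+1-i$ gives the identity on $S$. Simplices are opposite if every chamber containing either is opposite some chamber containing the other. For $J\subseteq S$, $\theta$ is $J$-domestic if no simplex of type $J$ is mapped to an opposite; domestic if no chamber is mapped to an opposite; exceptional domestic if domestic and every $i\in S$ lies in the type of some simplex mapped to an opposite; strongly exceptional domestic if domestic but not $J$-domestic for any proper subset $J\subsetneq S$ (for dualities of $\mathsf{A}_n$ this means: for each cotype $i$ there is a panel of cotype $i$ mapped to an opposite panel). *)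

(* Defs.v *)
(* The projective space PG(n,2) is modelled by the vector
   space V = F_2^(n+1) = 'rV['F_2]_(n.+1); its points/lines/... are the
   subspaces U of V with 0 < \dim U < n+1.  The "type" of such a subspace is
   its vector dimension \dim U (= projective dimension + 1), so types range
   over S = {1,...,n}.  Types are indexed by i : 'I_n, standing for type i+1. *)
From HB Require Import structures.
From mathcomp Require Import all_boot all_order all_algebra all_field.

Set Implicit Arguments.
Unset Strict Implicit.
Unset Printing Implicit Defensive.

Import GRing.Theory.
Local Open Scope ring_scope.

Section ProjectiveSpace.
Variable n : nat.

Definition pt := 'rV['F_2]_(n.+1).
Definition subsp := {vspace pt}.

Definition proper_sub (U : subsp) : bool := (0 < \dim U < n.+1)%N.

Definition incident (U W : subsp) : bool := (U <= W)%VS || (W <= U)%VS.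

Definition is_duality (th : subsp -> subsp) : Prop :=
  [/\ forall U, proper_sub U -> proper_sub (th U) /\ \dim (th U) = (n.+1 - \dim U)%N,
      forall U W, proper_sub U -> proper_sub W -> th U = th W -> U = W,
      forall W, proper_sub W -> exists2 U, proper_sub U & th U = W
    & forall U W, proper_sub U -> proper_sub W ->
        incident (th U) (th W) = incident U W].

(* a simplex (flag) is given by its type J (i in J stands for type i+1) and
   the choice of a subspace of each type in J; entries outside J are
   irrelevant *)
Definition simplex := ({set 'I_n} * ('I_n -> subsp))%type.

Definition is_simplex (A : simplex) : Prop :=
  (forall i, i \in A.1 -> \dim (A.2 i) = i.+1) /\
  (forall i j, i \in A.1 -> j \in A.1 -> (i <= j)%N -> (A.2 i <= A.2 j)%VS).

Definition chamber (C : 'I_n -> subsp) : Prop := is_simplex (setT, C).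

Definition contains (C : 'I_n -> subsp) (A : simplex) : Prop :=
  forall i, i \in A.1 -> C i = A.2 i.

(* chambers (complete flags) C, D are opposite iff C_i and D_{n+1-i} are
   complementary for all types i; since dimensions add up to n+1 this is
   C_i :&: D_{n+1-i} = 0 *)
Definition opp_chamber (C D : 'I_n -> subsp) : Prop :=
  forall i, (C i :&: D (rev_ord i) = 0)%VS.

Definition opposite (A B : simplex) : Prop :=
  (forall C, chamber C -> contains C A ->
     exists D, [/\ chamber D, contains D B & opp_chamber C D]) /\
  (forall D, chamber D -> contains D B ->
     exists C, [/\ chamber C, contains C A & opp_chamber C D]).

Definition img (th : subsp -> subsp) (A : simplex) : simplex :=
  ([set rev_ord i | i in A.1], fun i => th (A.2 (rev_ord i))).

Definition mapped_to_opposite th (A : simplex) : Prop :=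
  is_simplex A /\ opposite A (img th A).

Definition J_domestic th (J : {set 'I_n}) : Prop :=
  forall A : simplex, A.1 = J -> ~ mapped_to_opposite th A.

Definition domestic th : Prop := J_domestic th setT.

Definition exceptional_domestic th : Prop :=
  domestic th /\
  forall i : 'I_n, exists A : simplex, i \in A.1 /\ mapped_to_opposite th A.

Definition strongly_exceptional_domestic th : Prop :=
  domestic th /\ forall J : {set 'I_n}, J \proper setT -> ~ J_domestic th J.

End ProjectiveSpace.

(* Main.v *)
Require Import Defs.
From mathcomp Require Import all_boot all_order all_algebra all_field.
From mathcomp Require Import zify.
Set Implicit Arguments. Unset Strict Implicit. Unset Printing Implicit Defensive.
Import GRing.Theory.
Local Open Scope ring_scope.

Section Main.
Variable n : nat.
Variable th : subsp n -> subsp n.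
Hypothesis Hd : is_duality th.

Local Notation SP := (subsp n).
Local Notation PT := (pt n).

Lemma dimf : \dim (fullv : SP) = n.+1.
Proof. by rewrite dimvf /dim /= mul1n. Qed.

Lemma dim_le (U : SP) : (\dim U <= n.+1)%N.
Proof. by have := dimvS (subvf U); rewrite dimf. Qed.

Lemma eq_dim (X Y : SP) : (X <= Y)%VS -> (\dim Y <= \dim X)%N -> X = Y.
Proof. by move=> h1 h2; apply/eqP; rewrite eqEdim h1 h2. Qed.

Lemma full_dim (U : SP) : (U == fullv) = (\dim U == n.+1).
Proof.
apply/eqP/eqP => [->|h]; first exact: dimf.
by apply: eq_dim; rewrite ?subvf // dimf h.
Qed.

Lemma psubE (U : SP) : Defs.proper_sub U = (U != 0%VS) && (U != fullv).
Proof.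
rewrite /Defs.proper_sub -dimv_eq0 full_dim lt0n.
by rewrite ltn_neqAle dim_le andbT.
Qed.

Definition Th (U : SP) : SP :=
  if U == 0%VS then fullv else if U == fullv then 0%VS else th U.

Lemma full_neq0 : (fullv : SP) != 0%VS.
Proof. by rewrite -dimv_eq0 dimf. Qed.

Lemma Th0 : Th 0%VS = fullv.
Proof. by rewrite /Th eqxx. Qed.

Lemma Thf : Th fullv = 0%VS.
Proof. by rewrite /Th (negbTE full_neq0) eqxx. Qed.

Lemma Th_proper U : Defs.proper_sub U -> Th U = th U.
Proof. by rewrite psubE /Th => /andP[/negbTE -> /negbTE ->]. Qed.

Lemma dimTh U : \dim (Th U) = (n.+1 - \dim U)%N.
Proof.
case: Hd => H1 _ _ _.
rewrite /Th; case: eqP => [->|h0]; first by rewrite dimf dimv0.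
case: eqP => [->|hf]; first by rewrite dimf dimv0 subnn.
have hp : Defs.proper_sub U by rewrite psubE; apply/andP; split; apply/eqP.
by case: (H1 U hp).
Qed.

Lemma Th_mono U W : (U <= W)%VS -> (Th W <= Th U)%VS.
Proof.
case: Hd => H1 _ _ H4 hUW.
case: (U =P 0%VS) => [->|h0]; first by rewrite Th0 subvf.
case: (W =P fullv) => [->|hf]; first by rewrite Thf sub0v.
have hW0 : W != 0%VS.
  apply/negP => /eqP hW; apply: h0; apply/eqP; rewrite -subv0 -hW //.
have hUf : U != fullv.
  apply/negP => /eqP hU; apply: hf; apply/eqP; rewrite eqEsubv subvf -hU //.
have hpU : Defs.proper_sub U by rewrite psubE hUf andbT; apply/eqP.
have hpW : Defs.proper_sub W by rewrite psubE hW0; apply/eqP.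
rewrite !Th_proper //.
have := H4 U W hpU hpW; rewrite /incident hUW /= => /orP[h|//].
have [_ dU] := H1 U hpU; have [_ dW] := H1 W hpW.
suff -> : th U = th W by [].
apply: eq_dim h _; rewrite dU dW; apply: leq_sub2l; exact: dimvS.
Qed.

Lemma Th_refl U W : (Th W <= Th U)%VS -> (U <= W)%VS.
Proof.
case: Hd => H1 _ _ H4 h.
have hd : (\dim U <= \dim W)%N.
  have := dimvS h; rewrite !dimTh => hh.
  have := dim_le U; have := dim_le W; lia.
case: (U =P 0%VS) => [->|h0]; first exact: sub0v.
case: (W =P fullv) => [->|hf]; first exact: subvf.
have hUf : U != fullv.
  apply/negP; rewrite full_dim => /eqP hU; apply: hf; apply/eqP.
  rewrite full_dim; apply/eqP; have := dim_le W; lia.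
have hW0 : W != 0%VS.
  apply/negP; rewrite -dimv_eq0 => /eqP hW; apply: h0; apply/eqP.
  rewrite -dimv_eq0; apply/eqP; lia.
have hpU : Defs.proper_sub U by rewrite psubE hUf andbT; apply/eqP.
have hpW : Defs.proper_sub W by rewrite psubE hW0; apply/eqP.
move: h; rewrite !Th_proper // => h.
have := H4 W U hpW hpU; rewrite /incident h /= => /esym/orP[hWU|//].
by rewrite (eq_dim hWU hd).
Qed.

Lemma Th_surj W : exists U, Th U = W.
Proof.
case: Hd => _ _ H3 _.
case: (W =P 0%VS) => [->|h0]; first by exists fullv; exact: Thf.
case: (W =P fullv) => [->|hf]; first by exists 0%VS; exact: Th0.
have hp : Defs.proper_sub W by rewrite psubE; apply/andP; split; apply/eqP.
have [U hU <-] := H3 W hp. by exists U; rewrite Th_proper.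
Qed.

Lemma Th_inj U W : Th U = Th W -> U = W.
Proof.
by move=> h; apply: subv_anti; apply/andP; split; apply: Th_refl; rewrite h subvv.
Qed.

Lemma Th_add A B : Th (A + B)%VS = (Th A :&: Th B)%VS.
Proof.
apply: subv_anti; apply/andP; split.
  by rewrite subv_cap; apply/andP; split; apply: Th_mono; rewrite ?addvSl ?addvSr.
have [T hT] := Th_surj (Th A :&: Th B)%VS.
rewrite -hT; apply: Th_mono; rewrite subv_add; apply/andP; split; apply: Th_refl;
  rewrite hT ?capvSl ?capvSr //.
Qed.

Definition nd (U : SP) := (U :&: Th U == 0)%VS.

Lemma nd_full U : nd U -> (U + Th U)%VS = fullv.
Proof.
move=> /eqP h; apply/eqP; rewrite full_dim.
have := dimv_sum_cap U (Th U); rewrite h dimv0 addn0 dimTh => ->.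
by rewrite subnKC ?dim_le.
Qed.

Lemma nd_Th U : nd U -> nd (Th U).
Proof. by move=> h; rewrite /nd -Th_add nd_full // Thf. Qed.


Lemma f2 (a : PT) : a + a = 0.
Proof. rewrite -[a in a + _]scale1r -[a in _ + a]scale1r -scalerDl.
by rewrite [X in X *: a](_ : _ = 0) ?scale0r //; apply: val_inj. Qed.

Lemma f2k (k : 'F_2) (a : PT) : k != 0 -> k *: a = a.
Proof.
by case: k => [[|[|m]] hk] //= _; rewrite -[RHS]scale1r; congr (_ *: _); apply: val_inj.
Qed.

Lemma line_notin (v : PT) (X : SP) : v \notin X -> (<[v]>%VS :&: X = 0)%VS.
Proof.
move=> hv; apply/eqP; rewrite -dimv_eq0.
have h1 := dimvS (capvSl <[v]>%VS X).
move: h1; rewrite dim_vline; case: (v =P 0) => [->|hv0] /=.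
  by rewrite leqn0.
case E: (\dim _) => [//|[|//]] _.
have e : (<[v]>%VS :&: X)%VS = <[v]>%VS by apply: eq_dim; rewrite ?capvSl // E dim_vline; case: eqP.
by move: (capvSr <[v]>%VS X); rewrite e -memvE (negbTE hv).
Qed.

Lemma dim_add_line (X : SP) v : v \notin X -> \dim (X + <[v]>%VS)%VS = (\dim X).+1.
Proof.
move=> hv; have := dimv_sum_cap X <[v]>%VS.
rewrite capvC line_notin // dimv0 addn0 dim_vline => ->.
case: (v =P 0) => [e|_]; last by rewrite addn1.
by move: hv; rewrite e mem0v.
Qed.

Lemma hyp_add (H : SP) : \dim H = n -> forall a b : PT,
  (a + b \notin H) = (a \notin H) (+) (b \notin H).
Proof.
move=> hH a b.
case ha: (a \in H).
  by rewrite rpredDl.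
case hb: (b \in H).
  by rewrite rpredDr // ha.
suff -> : a + b \in H by [].
have hf : (H + <[a]>%VS)%VS = fullv.
  by apply/eqP; rewrite full_dim dim_add_line ?ha // hH.
have := memvf b; rewrite -hf => /memv_addP[h hh [w /vlineP[k ->] eb]].
have hk : k != 0.
  by apply/negP => /eqP k0; move: hb; rewrite eb k0 scale0r addr0 hh.
by rewrite eb f2k // addrCA f2 addr0.
Qed.

Definition Bf (u x : PT) : bool := x \notin Th <[u]>%VS.

Lemma Bf0l x : Bf 0 x = false.
Proof. by rewrite /Bf (_ : <[0]>%VS = 0%VS) ?Th0 ?memvf //; apply/eqP; rewrite -dimv_eq0 dim_vline eqxx. Qed.

Lemma Bf0r u : Bf u 0 = false.
Proof. by rewrite /Bf mem0v. Qed.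

Lemma dimTh_line u : u != 0 -> \dim (Th <[u]>%VS) = n.
Proof. by move=> hu; rewrite dimTh dim_vline hu subn1. Qed.

Lemma Bf_addr u x y : Bf u (x + y) = Bf u x (+) Bf u y.
Proof.
case: (u =P 0) => [->|hu]; first by rewrite !Bf0l.
by rewrite /Bf hyp_add // dimTh_line //; apply/eqP.
Qed.

Lemma Bf_hyp x : x != 0 -> exists H : SP, \dim H = n /\ forall u, Bf u x = (u \notin H).
Proof.
move=> hx; have [H hH] := Th_surj <[x]>%VS.
exists H; split.
  have := dimTh H; rewrite hH dim_vline hx => e.
  have := dim_le H; lia.
move=> u; rewrite /Bf memvE -hH; congr (~~ _).
apply/idP/idP => [/Th_refl|h]; first by rewrite memvE.
by apply: Th_mono; rewrite -memvE.
Qed.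

Lemma Bf_addl u w x : Bf (u + w) x = Bf u x (+) Bf w x.
Proof.
case: (x =P 0) => [->|/eqP hx]; first by rewrite !Bf0r.
have [H [hH e]] := Bf_hyp hx.
by rewrite !e hyp_add.
Qed.

Lemma lemA (P : SP) v : nd P -> v \in Th P -> Bf v v ->
  [/\ nd (P + <[v]>%VS)%VS, \dim (P + <[v]>%VS)%VS = (\dim P).+1 &
      Th (P + <[v]>%VS)%VS = (Th P :&: Th <[v]>%VS)%VS].
Proof.
move=> hP hv hB.
have hvP : v \notin P.
  apply/negP => hvP'; move: hB; rewrite /Bf.
  have : v \in (P :&: Th P)%VS by rewrite memv_cap hvP' hv.
  by rewrite (eqP hP) memv0 => /eqP ->; rewrite mem0v.
split; [|exact: dim_add_line|exact: Th_add].
rewrite /nd Th_add capvA addvC -vspace_modl -?memvE //.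
by rewrite (eqP hP) addv0 line_notin.
Qed.


Lemma Bf_vv (v : PT) : Bf v v -> v != 0.
Proof. by apply: contraTneq => ->; rewrite Bf0l. Qed.

Lemma step (P : SP) v : nd P -> (\dim P + 4 <= n.+1)%N -> v \in Th P -> Bf v v ->
  exists v' w, [/\ v' \in Th P, Bf v' v', w \in Th (P + <[v']>)%VS & Bf w w].
Proof.
move=> hP hdim hv hB.
have [Q1 Q2 Q3] := lemA hP hv hB.
case: (boolP [exists w, (w \in (Th P :&: Th <[v]>%VS)%VS) && Bf w w]).
  move/existsP => [w /andP[hw hBw]]; exists v, w; split => //.
  by rewrite Q3.
rewrite negb_exists => /forallP hno.
have v0 := Bf_vv hB.
have [Hv [dHv eHv]] := Bf_hyp v0.
pose K := (Th P :&: Th <[v]>%VS :&: Hv)%VS.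
have hKX : (K <= Th P :&: Th <[v]>%VS)%VS by exact: capvSl.
case: (boolP [exists y, exists y', [&& y \in K, y' \in K & Bf y y']]); last first.
  rewrite negb_exists => /forallP hK; exfalso.
  have iso : forall y y', y \in K -> y' \in K -> y' \in Th <[y]>%VS.
    move=> y y' hy hy'; have := hK y; rewrite negb_exists => /forallP /(_ y').
    by rewrite hy hy' /= /Bf negbK.
  have [S hS] := Th_surj K.
  have KS : (K <= S)%VS.
    apply/subvP => y hy; rewrite memvE; apply: Th_refl; rewrite hS.
    by apply/subvP => y' hy'; apply: iso.
  have KK : (K <= Th K)%VS by rewrite -{1}hS; apply: Th_mono.
  have KQ : (K <= Th (P + <[v]>%VS))%VS by rewrite Q3.
  have KKQ : (K <= Th (K + (P + <[v]>%VS)))%VS by rewrite Th_add subv_cap KK KQ.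
  have d1 := dimvS KKQ; rewrite dimTh in d1.
  have cap0 : (K :&: (P + <[v]>%VS) = 0)%VS.
    apply/eqP; rewrite -subv0 -(eqP Q1) capvC.
    by apply: capvS => //; rewrite subvv.
  have d2 := dimv_sum_cap K (P + <[v]>%VS)%VS; rewrite cap0 dimv0 addn0 Q2 in d2.
  have d3 : (\dim (Th P :&: Th <[v]> + Hv)%VS + \dim K = \dim (Th P :&: Th <[v]>)%VS + n)%N.
    by rewrite dimv_sum_cap dHv.
  rewrite -Q3 dimTh Q2 in d3.
  have d4 := dim_le (Th (P + <[v]>%VS) + Hv)%VS.
  rewrite d2 in d1.
  move: d1 d3 d4 hdim; lia.
move/existsP => [y /existsP[y' /and3P[hy hy' hyy']]].
have facts : forall z, z \in K -> [/\ z \in Th P, Bf v z = false, Bf z v = false & Bf z z = false].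
  move=> z hz; have hzX := subvP hKX z hz.
  move: hzX; rewrite memv_cap => /andP[hz1 hz2].
  have hz3 : z \in Hv by move: hz; rewrite !memv_cap => /andP[_ ->].
  split => //; first by rewrite /Bf hz2.
    by rewrite eHv hz3.
  by have := hno z; rewrite memv_cap hz1 hz2 /= => /negbTE.
have [y1 y2 y3 y4] := facts y hy.
have [z1 z2 z3 z4] := facts y' hy'.
have hv' : v + y \in Th P by rewrite memvD.
have hB' : Bf (v + y) (v + y) by rewrite Bf_addl !Bf_addr hB y2 y3 y4.
exists (v + y), (v + y'); split => //.
  have [_ _ ->] := lemA hP hv' hB'.
  have : Bf (v + y) (v + y') = false by rewrite Bf_addl !Bf_addr hB z2 y3 hyy'.
  by rewrite memv_cap memvD //= /Bf => /negbFE.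
by rewrite Bf_addl !Bf_addr hB z2 z3 z4.
Qed.


Lemma nd0 : nd 0%VS.
Proof. by rewrite /nd cap0v. Qed.

Lemma chain m : (m + 3 <= n.+1)%N -> (exists v, Bf v v) -> exists P : nat -> SP,
  [/\ P 0%N = 0%VS, (forall i, (i <= m)%N -> nd (P i) /\ \dim (P i) = i),
      (forall i j, (i <= j <= m)%N -> (P i <= P j)%VS) &
      exists2 v, v \in Th (P m) & Bf v v].
Proof.
move=> hm [v0 hv0]; elim: m hm => [|m IH] hm.
  exists (fun _ => 0%VS); split.
  - by [].
  - by move=> i; rewrite leqn0 => /eqP ->; rewrite nd0 dimv0.
  - by move=> i j _; rewrite subvv.
  - by exists v0; rewrite ?Th0 ?memvf.
have [P [P0 Pnd Pmono [v hv hB]]] := IH (ltnW hm).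
have [hPm dPm] := Pnd m (leqnn m).
have hd4 : (\dim (P m) + 4 <= n.+1)%N by rewrite dPm; lia.
have [v' [w [hv' hB' hw hBw]]] := step hPm hd4 hv hB.
have [Q1 Q2 Q3] := lemA hPm hv' hB'.
exists (fun i => if (i <= m)%N then P i else (P m + <[v']>)%VS); split.
- by rewrite leq0n.
- move=> i hi; case: ifP => hi'; first exact: Pnd.
  have -> : i = m.+1 by lia.
  by rewrite Q2 dPm.
- move=> i j /andP[hij hj]; case: ifP => hi; case: ifP => hj'.
  + by apply: Pmono; rewrite hij hj'.
  + by apply: subv_trans (addvSl _ _); apply: Pmono; rewrite hi leqnn.
  + lia.
  + exact: subvv.
- by exists w; rewrite ?ltnn.
Qed.

Lemma chain_full : (2 <= n)%N -> (exists v, Bf v v) -> exists P : nat -> SP,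
  [/\ P 0%N = 0%VS, (forall i, (i <= n.-1)%N -> nd (P i) /\ \dim (P i) = i) &
      (forall i j, (i <= j <= n.-1)%N -> (P i <= P j)%VS)].
Proof.
move=> hn hv.
have hm : ((n - 2) + 3 <= n.+1)%N by lia.
have [P [P0 Pnd Pmono [v hv' hB]]] := chain hm hv.
have [hPm dPm] := Pnd (n - 2)%N (leqnn _).
have [Q1 Q2 Q3] := lemA hPm hv' hB.
exists (fun i => if (i <= n - 2)%N then P i else (P (n - 2)%N + <[v]>)%VS); split.
- by rewrite leq0n.
- move=> i hi; case: ifP => hi'; first exact: Pnd.
  have -> : i = (n - 2).+1 by lia.
  by rewrite Q2 dPm.
- move=> i j /andP[hij hj]; case: ifP => hi; case: ifP => hj'.
  + by apply: Pmono; rewrite hij hj'.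
  + by apply: subv_trans (addvSl _ _); apply: Pmono; rewrite hi leqnn.
  + lia.
  + exact: subvv.
Qed.

Lemma mix (A B : SP) : nd A -> nd B -> (A <= B)%VS ->
  nd (A + Th B)%VS /\ \dim (A + Th B)%VS = (\dim A + (n.+1 - \dim B))%N.
Proof.
move=> hA hB hAB; split.
  rewrite /nd Th_add capvA (addvC A) -vspace_modl ?Th_mono //.
  by rewrite (eqP hA) addv0; apply: nd_Th.
have cap0 : (A :&: Th B = 0)%VS.
  apply/eqP; rewrite -subv0 -(eqP hB); exact: capvS.
by have := dimv_sum_cap A (Th B); rewrite cap0 dimv0 addn0 dimTh.
Qed.


Lemma grow (Kp U : SP) : (Kp <= U)%VS -> forall k (L : SP), (L <= U)%VS ->
  (L :&: Kp = 0)%VS -> (\dim L + k + \dim Kp <= \dim U)%N ->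
  exists E : SP, [/\ (L <= E)%VS, (E <= U)%VS, \dim E = (\dim L + k)%N & (E :&: Kp = 0)%VS].
Proof.
move=> hKU; elim => [|k IH] L hLU hLK hd.
  by exists L; rewrite addn0 subvv.
have dLK : \dim (L + Kp)%VS = (\dim L + \dim Kp)%N.
  by have := dimv_sum_cap L Kp; rewrite hLK dimv0 addn0.
have : ~~ (U <= L + Kp)%VS.
  apply/negP => /dimvS; rewrite dLK; lia.
case/subvPn => u hu hnu.
have hnuL : u \notin L.
  by apply: contra hnu; apply: (subvP (addvSl L Kp)).
have dL' := dim_add_line hnuL.
have hL'U : (L + <[u]> <= U)%VS by rewrite subv_add hLU -memvE hu.
have hL'K : ((L + <[u]>) :&: Kp = 0)%VS.
  apply/eqP; rewrite -dimv_eq0.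
  have := dimv_sum_cap (L + <[u]>)%VS Kp.
  rewrite -addvA (addvC <[u]>%VS) addvA dim_add_line // dLK dL'; lia.
have hd' : (\dim (L + <[u]>)%VS + k + \dim Kp <= \dim U)%N by rewrite dL'; lia.
have [E [h1 h2 h3 h4]] := IH _ hL'U hL'K hd'.
exists E; split => //; last by rewrite h3 dL' addSnnS.
exact: subv_trans (addvSl _ _) h1.
Qed.


Lemma rev_le (i j : 'I_n) : (rev_ord i <= rev_ord j)%N = (j <= i)%N.
Proof. by rewrite /=; have := ltn_ord i; have := ltn_ord j; lia. Qed.

Lemma ext (C : 'I_n -> SP)
  (HC1 : forall i j : 'I_n, (i <= j)%N -> (C i <= C j)%VS)
  (HC2 : forall i : 'I_n, (\dim (C i) <= i.+1)%N)
  (HC3 : forall i j : 'I_n, j = i.+1 :> nat -> (\dim (C j) <= (\dim (C i)).+1)%N) :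
  forall (K : {set 'I_n}) (B : 'I_n -> SP), is_simplex (K, B) ->
  (forall j, j \in K -> (B j :&: C (rev_ord j) = 0)%VS) ->
  exists D, [/\ chamber D, contains D (K, B) & forall j, (D j :&: C (rev_ord j) = 0)%VS].
Proof.
move=> K; move: {2}#|~: K| (erefl #|~: K|) => m; elim: m K => [|m IH] K hm B hs hopp.
  have KT : K = setT.
    apply/setP => i; move/eqP: hm; rewrite cards_eq0 => /eqP/setP/(_ i).
    by rewrite !inE => /negbFE ->.
  subst K; exists B; split; [exact: hs | by move=> i | by move=> j; apply: hopp; rewrite inE].
case: hs => /= hs1 hs2.
have [i0 hi0] : exists i0, i0 \in ~: K by apply/card_gt0P; rewrite hm.
case: (arg_maxnP (fun i : 'I_n => i : nat) hi0) => j hj jmax.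
have jK : j \notin K by rewrite -in_setC; exact: hj.
have aboveK : forall i : 'I_n, (j < i)%N -> i \in K.
  move=> i hi; apply/negPn/negP => hiK.
  have hiC : i \in ~: K by rewrite in_setC.
  by have := jmax i hiC; lia.
have [U [hU1 hU2 hU3 hU4]] : exists U : SP, [/\ forall i, i \in K -> (j < i)%N -> (U <= B i)%VS,
    \dim U = j.+2, (\dim (U :&: C (rev_ord j)) <= 1)%N &
    forall i, i \in K -> (i < j)%N -> (B i <= U)%VS].
  case: (ltnP j.+1 n) => hjn.
    pose j1 := Ordinal hjn.
    have j1K : j1 \in K by apply: aboveK; rewrite /= ltnSn.
    exists (B j1); split.
    - by move=> i hi hji; apply: hs2 => //.
    - by rewrite hs1.
    - have c1 : (C (rev_ord j1) <= C (rev_ord j))%VS by apply: HC1; rewrite rev_le /= leqnSn.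
      have c2 : ((B j1 :&: C (rev_ord j)) :&: C (rev_ord j1) = 0)%VS.
        apply/eqP; rewrite -subv0 -(eqP (introT eqP (hopp j1 j1K))).
        by apply: capvS; rewrite ?capvSl ?subvv.
      have c3 : ((B j1 :&: C (rev_ord j)) + C (rev_ord j1) <= C (rev_ord j))%VS.
        by rewrite subv_add capvSr c1.
      have c4 := dimvS c3.
      have c5 := dimv_sum_cap (B j1 :&: C (rev_ord j))%VS (C (rev_ord j1)).
      rewrite c2 dimv0 addn0 in c5.
      have c6 := HC3 (rev_ord j1) (rev_ord j).
      have c7 : rev_ord j = (rev_ord j1).+1 :> nat by rewrite /=; have := ltn_ord j; lia.
      move: (c6 c7) c4 c5; lia.
    - by move=> i hi hij; apply: hs2 => //=; lia.
  exists fullv; split.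
  - by move=> i _ hi; have := ltn_ord i; lia.
  - by rewrite dimf; have := ltn_ord j; lia.
  - rewrite capfv; apply: leq_trans (HC2 _) _; rewrite /=; lia.
  - by move=> *; exact: subvf.
have [L [hL1 hL2 hL3 hL4]] : exists L : SP, [/\ forall i, i \in K -> (i < j)%N -> (B i <= L)%VS,
    (\dim L <= j.+1)%N, (L <= U)%VS & (L :&: C (rev_ord j) = 0)%VS].
  case: (pickP (fun i : 'I_n => (i \in K) && (i < j)%N)) => [a0 ha0|hnone]; last first.
    exists 0%VS; split; rewrite ?dimv0 ?sub0v ?cap0v //.
    by move=> i hi hij; have := hnone i; rewrite hi hij.
  case: (@arg_maxnP _ a0 (fun i : 'I_n => (i \in K) && (i < j)%N) (fun i : 'I_n => i : nat) ha0) => a /andP[aK aj] amax.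
  exists (B a); split.
  - move=> i hi hij; apply: hs2 => //; exact: amax (introT andP (conj hi hij)).
  - by rewrite hs1 // ltnW.
  - exact: hU4.
  - apply/eqP; rewrite -subv0 -(eqP (introT eqP (hopp a aK))).
    by apply: capvS; rewrite ?subvv // HC1 // rev_le ltnW.
pose Kp := (U :&: C (rev_ord j))%VS.
have hKpU : (Kp <= U)%VS by exact: capvSl.
have hLK : (L :&: Kp = 0)%VS.
  apply/eqP; rewrite -subv0 -hL4; apply: capvS; rewrite ?subvv ?capvSr //.
have hdL : (\dim L + (j.+1 - \dim L) + \dim Kp <= \dim U)%N.
  by move: hL2 hU3 hU2; rewrite -/Kp; lia.
have [E [hE1 hE2 hE3 hE4]] := grow hKpU hL3 hLK hdL.
have dE : \dim E = j.+1 by rewrite hE3; lia.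
have hEC : (E :&: C (rev_ord j) = 0)%VS.
  apply/eqP; rewrite -subv0 -hE4 subv_cap capvSl /Kp subv_cap capvSr andbT.
  exact: subv_trans (capvSl _ _) hE2.
pose K' := (j |: K).
pose B' := fun i => if i == j then E else B i.
have hj' : j \in ~: K := hj.
have hm' : #|~: K'| = m.
  have eK : ~: K' = (~: K) :\ j by apply/setP => i; rewrite !inE negb_or.
  by rewrite eK; have := cardsD1 j (~: K); rewrite hm hj' add1n => -[->].
have hs' : is_simplex (K', B').
  split => /= [i|i i'].
    rewrite /K' /B' in_setU1 => /orP[/eqP ->|hi]; first by rewrite eqxx.
    by case: eqP => [e|_]; [move: jK; rewrite -e hi | exact: hs1].
  rewrite /K' /B' !in_setU1 => hi hi' hii'.
  case: (i =P j) => [ei|nei]; case: (i' =P j) => [ei'|nei'].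
  - exact: subvv.
  - move: hi' => /orP[/eqP //|hi'].
    apply: subv_trans hE2 (hU1 _ hi' _).
    by move: hii'; rewrite ei; case: ltngtP => // e _; case: nei'; apply: val_inj.
  - move: hi => /orP[/eqP //|hi].
    apply: subv_trans (hL1 _ hi _) hE1.
    by move: hii'; rewrite ei'; case: ltngtP => // e _; case: nei; apply: val_inj.
  - move: hi hi' => /orP[/eqP //|hi] /orP[/eqP //|hi'].
    exact: hs2.
have hopp' : forall j0, j0 \in K' -> (B' j0 :&: C (rev_ord j0) = 0)%VS.
  move=> j0; rewrite /K' /B' in_setU1; case: eqP => [->|_] //= hj0.
  exact: hopp.
have [D [hD1 hD2 hD3]] := IH K' hm' B' hs' hopp'.
exists D; split => // i hi.
have := hD2 i; rewrite /= /K' /B' in_setU1 hi orbT => /(_ isT) ->.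
by case: eqP => // e; move: jK; rewrite -e hi.
Qed.


Lemma chamber_HC (C : 'I_n -> SP) : chamber C ->
  [/\ forall i j : 'I_n, (i <= j)%N -> (C i <= C j)%VS,
      forall i : 'I_n, (\dim (C i) <= i.+1)%N &
      forall i j : 'I_n, j = i.+1 :> nat -> (\dim (C j) <= (\dim (C i)).+1)%N].
Proof.
case => /= h1 h2; split.
- by move=> i j hij; apply: h2; rewrite ?inE.
- by move=> i; rewrite h1 ?inE.
- by move=> i j e; rewrite !h1 ?inE // e.
Qed.

Lemma chamber_ext (K : {set 'I_n}) (B : 'I_n -> SP) : is_simplex (K, B) ->
  exists D, chamber D /\ contains D (K, B).
Proof.
move=> hs.
have c1 : forall i j : 'I_n, (i <= j)%N -> ((fun _ => 0%VS) i <= (fun _ : 'I_n => 0%VS : SP) j)%VS.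
  by move=> *; exact: subvv.
have c2 : forall i : 'I_n, (\dim ((fun _ => 0%VS : SP) i) <= i.+1)%N by move=> i; rewrite dimv0.
have c3 : forall i j : 'I_n, j = i.+1 :> nat -> (\dim ((fun _ => 0%VS : SP) j) <= (\dim ((fun _ => 0%VS : SP) i)).+1)%N.
  by move=> *; rewrite dimv0.
have c4 : forall j, j \in K -> (B j :&: (fun _ => 0%VS : SP) (rev_ord j) = 0)%VS.
  by move=> *; rewrite capv0.
have [D [h1 h2 _]] := ext c1 c2 c3 hs c4.
by exists D.
Qed.

Lemma opp_of (J : {set 'I_n}) (F : 'I_n -> SP) : is_simplex (J, F) ->
  (forall i, i \in J -> Defs.proper_sub (F i) /\ (F i :&: th (F i) = 0)%VS) ->
  opposite (J, F) (img th (J, F)).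
Proof.
case: Hd => H1 _ _ _.
move=> hs hF; case: (hs) => /= hs1 hs2.
have his : is_simplex ([set rev_ord i | i in J], fun i => th (F (rev_ord i))).
  split => /= [i|i i'].
    case/imsetP => i0 hi0 ->; rewrite rev_ordK.
    have [_ e] := H1 _ (hF i0 hi0).1; rewrite e hs1 //=.
    by have := ltn_ord i0; lia.
  case/imsetP => i0 hi0 -> /imsetP[i1 hi1 ->]; rewrite !rev_ordK rev_le => h.
  rewrite -(Th_proper (hF _ hi0).1) -(Th_proper (hF _ hi1).1).
  by apply: Th_mono; apply: hs2.
split.
- move=> C hC hCA.
  have [c1 c2 c3] := chamber_HC hC.
  have [|D [hD1 hD2 hD3]] := ext c1 c2 c3 his.
    move=> j /imsetP[i0 hi0 ->]; have e := hCA i0 hi0; rewrite /= in e.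
    rewrite rev_ordK capvC e.
    exact: (hF _ hi0).2.
  exists D; split => // i.
  by have := hD3 (rev_ord i); rewrite rev_ordK capvC.
- move=> D hD hDB.
  have [c1 c2 c3] := chamber_HC hD.
  have [|C [hC1 hC2 hC3]] := ext c1 c2 c3 hs.
    move=> j hj; rewrite (hDB (rev_ord j)) /= ?rev_ordK; first exact: (hF _ hj).2.
    by apply/imsetP; exists j.
  by exists C; split.
Qed.

End Main.

Theorem theorem3p11 (n : nat) (hn : (2 <= n)%N) (th : subsp n -> subsp n) :
  is_duality th -> exceptional_domestic th -> strongly_exceptional_domestic th.
Proof.
move=> Hd [hdom hexc]; split => // J hJ hJdom.
have h0 : (0 < n)%N by apply: ltnW.
pose i0 := Ordinal h0.
have [v hv] : exists v, Bf th v v.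
  have [[K B] [/= hi0 [hs hopp]]] := hexc i0.
  have [C [hC hCA]] := chamber_ext hs.
  have [D [hD hDc hopp']] := hopp.1 C hC hCA.
  have e1 := hCA i0 hi0; rewrite /= in e1.
  have e2 := hDc (rev_ord i0) (imset_f _ hi0); rewrite /= rev_ordK in e2.
  have hx := hopp' i0; rewrite e1 e2 in hx.
  have dB : \dim (B i0) = 1%N by case: hs => /= h1 _; rewrite h1.
  pose w := vpick (B i0).
  have w0 : w != 0 by rewrite vpick0 -dimv_eq0 dB.
  have ew : B i0 = <[w]>%VS.
    apply/esym/eq_dim; first by rewrite -memvE memv_pick.
    by rewrite dB dim_vline w0.
  have hp : Defs.proper_sub (B i0) by rewrite /Defs.proper_sub dB; lia.
  exists w; rewrite /Bf -ew Th_proper //; apply/negP => hw.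
  have : w \in (B i0 :&: th (B i0))%VS by rewrite memv_cap hw memv_pick.
  by rewrite hx memv0 (negbTE w0).
have [Pc [P0 Pnd Pmono]] := chain_full Hd hn (ex_intro _ v hv).
have [k _ hk] : exists2 k, k \in [set: 'I_n] & k \notin J.
  by move: hJ; rewrite properE => /andP[_ /subsetPn].
pose F := fun t : 'I_n => if (t < k)%N then Pc t.+1 else (Pc k + Th th (Pc (k + n - t)%N))%VS.
have Fprop : forall t : 'I_n, t != k -> nd th (F t) /\ \dim (F t) = t.+1.
  move=> t htk; have := ltn_ord t; have := ltn_ord k; rewrite /F => ht hk'.
  case: ltnP => htk'.
    by apply: Pnd; lia.
  have htk2 : (k < t)%N by rewrite ltn_neqAle htk' andbT; apply: contra htk => /eqP e; apply/eqP/val_inj.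
  have l1 : (k <= n.-1)%N by lia.
  have l2 : (k + n - t <= n.-1)%N by lia.
  have l3 : (k <= k + n - t <= n.-1)%N by apply/andP; split; lia.
  have [hn1 hd1] := Pnd k l1.
  have [hn2 hd2] := Pnd (k + n - t)%N l2.
  have := mix Hd hn1 hn2 (Pmono _ _ l3).
  by rewrite hd1 hd2 => -[-> ->]; split => //; lia.
have Fmono : forall t t' : 'I_n, t != k -> t' != k -> (t <= t')%N -> (F t <= F t')%VS.
  move=> t t' htk ht'k htt'.
  have hkt : (t < k)%N || (k < t)%N.
    by rewrite -neq_ltn; apply: contra htk => /eqP e; apply/eqP/val_inj.
  have hkt' : (t' < k)%N || (k < t')%N.
    by rewrite -neq_ltn; apply: contra ht'k => /eqP e; apply/eqP/val_inj.
  have := ltn_ord t; have := ltn_ord t'; have := ltn_ord k; rewrite /F => h1 h2 h3.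
  case: ltnP => c1; case: ltnP => c2.
  - by apply: Pmono; lia.
  - apply: subv_trans (addvSl _ _); apply: Pmono; lia.
  - lia.
  - apply: addvS; first exact: subvv.
    apply: (Th_mono Hd); apply: Pmono; lia.
have hs : is_simplex (J, F).
  split => /= [t ht|t t' ht ht' htt'].
    have htk : t != k by apply: contraNneq hk => <-.
    exact: (Fprop t htk).2.
  apply: Fmono => //; [apply: contraNneq hk => <- // | apply: contraNneq hk => <- //].
apply: (hJdom (J, F) erefl); split; first exact: hs.
have hF : forall t, t \in J -> Defs.proper_sub (F t) /\ (F t :&: th (F t) = 0)%VS.
  move=> t ht.
  have htk : t != k by apply: contraNneq hk => <-.
  have [hnd hdim] := Fprop t htk.
  have hp : Defs.proper_sub (F t) by rewrite /Defs.proper_sub hdim; have := ltn_ord t; lia.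
  by split => //; rewrite -(Th_proper th hp); apply/eqP.
exact: (opp_of Hd hs hF).
Qed.
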